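(* Let $1/n\ll \nu\ll \lambda\ll 1$. Let $K_{2n+1}$ be 2-factorized. Suppose that $X,V\subseteq V(K_{2n+1})$ are disjoint, $(X,V)$ is $(10\nu n)$-replete and $|X|\leq \lambda n$. Suppose that $C\subseteq C(K_{2n+1})$ is such that every vertex $v\in V(K_{2n+1})$ has at least $3\lambda n$ neighbours in $V$ joined to $v$ by edges with colour in $C$. Then, for any set $C'\subseteq C(K_{2n+1})$ of at most $\nu n$ colours, there is a perfect $(C'\cup C)$-rainbow matching from $X$ to $V$ which uses every colour in $C'$.
   Context: A 2-factorization of $K_{2n+1}$ is an edge-colouring in which every vertex is incident to exactly 2 edges of each colour; $C(K_{2n+1})$ is its colour set. For disjoint $W,Y$, $(W,Y)$ is $\ell$-replete if for every colour at least $\ell$ edges of that colour join $W$ to $Y$. A perfect $D$-rainbow matching from $X$ to $V$ is a matching covering every vertex of $X$, each edge joining $X$ to $V$, with distinct colours all in $D$. $a\ll b$ means the statement holds whenever $a\le b^K/K$ for a suitable fixed absolute constant $K$ per relation; $1/n\ll\cdots$ entails $n$ large. *)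

(* Defs.v *)
From mathcomp Require Import all_boot all_order all_algebra.
Set Implicit Arguments. Unset Strict Implicit. Unset Printing Implicit Defensive.
Import Order.TTheory GRing.Theory Num.Theory.

(* Vertices of K_{2n+1} are 'I_(2n+1).  An edge-colouring with colour type Col
   is a symmetric function c : V -> V -> Col (its values on the diagonal are
   irrelevant: loops are not edges). *)
Notation vert n := 'I_(n.*2.+1).

Definition edge_colouring (n : nat) (Col : finType) (c : vert n -> vert n -> Col) :=
  forall u v, c u v = c v u.

(* 2-factorization: every vertex is incident to exactly 2 edges of each colour.
   The colour set C(K_{2n+1}) is then the whole type Col (every colour occurs). *)
Definition two_factorization (n : nat) (Col : finType) (c : vert n -> vert n -> Col) :=
  edge_colouring c /\
  forall (v : vert n) (col : Col), #|[set u | (u != v) && (c v u == col)]| = 2.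

Definition n_edges_between (n : nat) (Col : finType) (c : vert n -> vert n -> Col)
  (W Y : {set vert n}) (col : Col) : nat :=
  #|[set p : vert n * vert n | [&& p.1 \in W, p.2 \in Y & c p.1 p.2 == col]]|.

Definition replete (R : realFieldType) (n : nat) (Col : finType)
  (c : vert n -> vert n -> Col) (W Y : {set vert n}) (l : R) :=
  forall col : Col, (l <= (n_edges_between c W Y col)%:R)%R.

(* A perfect D-rainbow matching from X to V, given as the map f sending each
   x in X to its partner: edges {x, f x} (x in X) are pairwise disjoint, join
   X to V, and have distinct colours all in D. *)
Definition perfect_rainbow_matching (n : nat) (Col : finType)
  (c : vert n -> vert n -> Col) (D : {set Col}) (X V : {set vert n})
  (f : vert n -> vert n) :=
  [/\ forall x, x \in X -> f x \in V,
      {in X &, injective f},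
      {in X &, injective (fun x => c x (f x))} &
      forall x, x \in X -> c x (f x) \in D].

(* Main.v *)
Require Import Defs.
From mathcomp Require Import all_boot all_order all_algebra.
Import Order.TTheory GRing.Theory Num.Theory.
Set Implicit Arguments. Unset Strict Implicit.

Lemma fibre_bound (T U : finType) (A : {set T}) (B : {set U}) (g : T -> U) k :
  {in A, forall x, g x \in B} ->
  (forall y, #|[set x in A | g x == y]| <= k)%N -> (#|A| <= k * #|B|)%N.
Proof.
move=> gAB hk.
rewrite -sum1_card (partition_big g (mem B)) //=.
rewrite mulnC -sum_nat_const; apply: leq_sum => y yB.
rewrite sum1_card. apply: leq_trans (hk y).
apply: subset_leq_card; apply/subsetP => x; rewrite !inE. done.
Qed.

Lemma exists_notin (T : finType) (A B : {set T}) :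
  (#|B| < #|A|)%N -> exists2 x, x \in A & x \notin B.
Proof.
move=> h; apply/subsetPn; apply/negP => /subset_leq_card; rewrite leqNgt h.
done.
Qed.

Section Match.
Variables (n : nat) (Col : finType) (c : vert n -> vert n -> Col).
Variables (X V : {set vert n}) (D : {set Col}).
Hypothesis H2 : two_factorization c.
Hypothesis Hdis : [disjoint X & V].

Definition pm (S : {set vert n}) (f : vert n -> vert n) :=
  [/\ S \subset X, {in S, forall x, f x \in V}, {in S &, injective f},
      {in S &, injective (fun x => c x (f x))} &
      {in S, forall x, c x (f x) \in D}].

Definition img (S : {set vert n}) (f : vert n -> vert n) :=
  [set c x (f x) | x in S].

Lemma csym u v : c u v = c v u.
Proof. by case: H2 => h _; apply: h. Qed.

Lemma nbr2 x col : #|[set u | (u != x) && (c x u == col)]| = 2.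
Proof. by case: H2 => _ h; apply: h. Qed.

Lemma nbrU x (U : {set Col}) :
  (#|[set u | (u != x) && (c x u \in U)]| <= 2 * #|U|)%N.
Proof.
apply: (@fibre_bound _ _ _ _ (c x)) => [u|y]; first by rewrite inE => /andP[].
rewrite -(nbr2 x y); apply: subset_leq_card; apply/subsetP => u.
by rewrite !inE => /andP[/andP[-> _] ->].
Qed.

Lemma extend S f x u : pm S f -> x \in X -> x \notin S -> u \in V ->
  u \notin f @: S -> c x u \in D -> c x u \notin img S f ->
  pm (x |: S) (fun y => if y == x then u else f y) /\
  img (x |: S) (fun y => if y == x then u else f y) = c x u |: img S f.
Proof.
case=> sSX fV finj cinj cD xX xS uV uf cxD cxi.
have fe : {in S, forall y, (if y == x then u else f y) = f y}.
  by move=> y yS; case: eqP => // eyx; rewrite -eyx yS in xS.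
split; last first.
  rewrite /img imsetU1 eqxx; congr (_ |: _); apply: eq_in_imset => y yS /=.
  by rewrite fe.
split.
- by rewrite subUset sub1set xX.
- move=> y; rewrite in_setU1 => /orP[/eqP ->|yS]; first by rewrite eqxx.
  by rewrite fe // fV.
- move=> y z; rewrite !in_setU1 => /orP[/eqP ->|yS] /orP[/eqP ->|zS] //.
  + rewrite eqxx (fe z zS) => e; case/negP: uf; rewrite e; apply: imset_f zS.
  + rewrite eqxx (fe y yS) => e; case/negP: uf; rewrite -e; apply: imset_f yS.
  + by rewrite (fe y yS) (fe z zS); apply: finj.
- move=> y z; rewrite !in_setU1 => /orP[/eqP ->|yS] /orP[/eqP ->|zS] //=.
  + rewrite eqxx (fe z zS) => e; case/negP: cxi; rewrite e.
    by apply: (imset_f (fun y => c y (f y))) zS.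
  + rewrite eqxx (fe y yS) => e; case/negP: cxi; rewrite -e.
    by apply: (imset_f (fun y => c y (f y))) yS.
  + by rewrite (fe y yS) (fe z zS); apply: cinj.
- move=> y; rewrite in_setU1 => /orP[/eqP ->|yS]; first by rewrite eqxx.
  by rewrite fe // cD.
Qed.

Definition Eset col := [set p : vert n * vert n | [&& p.1 \in X, p.2 \in V & c p.1 p.2 == col]].

Lemma find_edge S f col : pm S f -> (4 * #|S| < n_edges_between c X V col)%N ->
  exists2 p : vert n * vert n, p \in Eset col & (p.1 \notin S) && (p.2 \notin f @: S).
Proof.
case=> sSX fV finj cinj cD h.
set A1 := [set p in Eset col | p.1 \in S].
set A2 := [set p in Eset col | p.2 \in f @: S].
have h1 : (#|A1| <= 2 * #|S|)%N.
  apply: (@fibre_bound _ _ _ _ fst) => [p|y]; first by rewrite inE => /andP[].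
  set F := [set _ in _ | _].
  have inj : {in F &, injective snd}.
    case=> [a b] [a' b']; rewrite !inE /= => /andP[_ /eqP ->] /andP[_ /eqP ->].
    by move=> /= ->.
  rewrite -(card_in_imset inj).
  have [yX|yX] := boolP (y \in X); last first.
    apply: leq_trans (_ : #|F| <= 2)%N; first by rewrite card_in_imset.
    rewrite (_ : F = set0) ?cards0 //; apply/setP; case=> a b; rewrite !inE /=.
    apply/negP => /andP[/andP[/and3P[aX _ _] _] /eqP ay].
    by rewrite -ay aX in yX.
  rewrite -(nbr2 y col); apply: subset_leq_card; apply/subsetP => u.
  case/imsetP => -[a b]; rewrite !inE /= => /andP[/andP[/and3P[aX bV e] _] /eqP ay] ->.
  rewrite -ay e andbT; apply/eqP => ba; by rewrite ba (disjointFr Hdis aX) in bV.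
have h2 : (#|A2| <= 2 * #|S|)%N.
  apply: leq_trans (_ : 2 * #|f @: S| <= _)%N; last by rewrite leq_mul2l leq_imset_card orbT.
  apply: (@fibre_bound _ _ _ _ snd) => [p|y]; first by rewrite inE => /andP[].
  set F := [set _ in _ | _].
  have inj : {in F &, injective fst}.
    case=> [a b] [a' b']; rewrite !inE /= => /andP[_ /eqP ->] /andP[_ /eqP ->].
    by move=> /= ->.
  rewrite -(card_in_imset inj).
  rewrite -(nbr2 y col); apply: subset_leq_card; apply/subsetP => u.
  case/imsetP => -[a b]; rewrite !inE /= => /andP[/andP[/and3P[aX bV e] _] /eqP ay] ->.
  rewrite -ay csym e andbT; apply/eqP => ba; by rewrite -ba (disjointFr Hdis aX) in bV.
have [p pE pn] : exists2 p, p \in Eset col & p \notin A1 :|: A2.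
  apply: exists_notin; apply: leq_ltn_trans (leq_card_setU A1 A2) _.
  apply: leq_ltn_trans (leq_add h1 h2) _.
  by rewrite -mulnDl; apply: h.
exists p => //; move: pn; rewrite !inE; move: (pE); rewrite inE => -> /=.
by rewrite negb_or.
Qed.

Lemma find_vertex S f x (C : {set Col}) :
  pm S f -> (3 * #|S| < #|[set u in V | (u != x) && (c x u \in C)]|)%N ->
  exists2 u, u \in [set u in V | (u != x) && (c x u \in C)] &
     (u \notin f @: S) && (c x u \notin img S f).
Proof.
move=> Hp h.
set B := f @: S :|: [set u | (u != x) && (c x u \in img S f)].
have [u uN un] : exists2 u, u \in [set u in V | (u != x) && (c x u \in C)] & u \notin B.
  apply: exists_notin; apply: leq_ltn_trans (leq_card_setU _ _) _.
  apply: leq_ltn_trans h.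
  have e : (3 * #|S| = #|S| + 2 * #|S|)%N by rewrite (mulSn 2).
  rewrite e; apply: leq_add; first exact: leq_imset_card.
  apply: leq_trans (nbrU x _) _; rewrite leq_mul2l leq_imset_card orbT //.
exists u => //; move: un; rewrite !inE negb_or => /andP[-> ].
move: uN; rewrite inE => /andP[_ /andP[-> _]] /=; done.
Qed.

End Match.
Local Open Scope ring_scope.
From mathcomp Require Import lra.

Theorem lemma4p4 (R : realFieldType) :
  exists K1 K2 K3 : nat, [/\ (0 < K1)%N, (0 < K2)%N, (0 < K3)%N &
  forall (nu lam : R) (n : nat),
    0 < nu -> 0 < lam -> (0 < n)%N ->
    lam <= K3%:R^-1 ->
    nu <= lam ^+ K2 / K2%:R ->
    (n%:R)^-1 <= nu ^+ K1 / K1%:R ->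
    forall (Col : finType) (c : vert n -> vert n -> Col),
    two_factorization c ->
    forall (X V : {set vert n}),
    [disjoint X & V] ->
    replete c X V (10 * nu * n%:R) ->
    #|X|%:R <= lam * n%:R ->
    forall C : {set Col},
    (forall v : vert n,
        3 * lam * n%:R <= #|[set u in V | (u != v) && (c v u \in C)]|%:R) ->
    forall C' : {set Col}, #|C'|%:R <= nu * n%:R ->
    exists f : vert n -> vert n,
      perfect_rainbow_matching c (C' :|: C) X V f /\
      forall col, col \in C' -> exists2 x, x \in X & c x (f x) = col].
Proof.
exists 1%N, 1%N, 1%N; split => // nu lam n nu0 lam0 n0 _ _ _ Col c H2 X V Hdis
  Hrep HX C HC C' HC'.
set D := C' :|: C.
have t0 : 0 < nu * n%:R by rewrite mulr_gt0 // ltr0n.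
have P1 : forall m (E : {set Col}), E \subset C' -> #|E| = m ->
    exists S f, [/\ pm c X V D S f, img c S f = E & #|S| = m].
  elim=> [|m IH] E sE cE.
    exists set0, id; split => //; last by rewrite cards0.
      by split => //; rewrite ?sub0set // => x; rewrite in_set0.
    by rewrite /img imset0; apply/esym/cards0_eq.
  have [col colE] : exists col, col \in E.
    by apply/set0Pn; rewrite -card_gt0 cE.
  have cE' : #|E :\ col| = m by move: cE; rewrite (cardsD1 col E) colE => -[].
  have sE' : E :\ col \subset C' by apply: subset_trans sE; apply: subsetDl.
  have [S [f [Hp Hi Hs]]] := IH _ sE' cE'.
  have hlt : (4 * #|S| < n_edges_between c X V col)%N.
    have hm : (m.+1 <= #|C'|)%N by rewrite -cE subset_leq_card.
    have hmR : (m.+1)%:R <= #|C'|%:R :> R by rewrite ler_nat.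
    have hr := Hrep col.
    rewrite -(ltr_nat R) natrM Hs; move: hmR hr; rewrite -!mulrA -natr1.
    move: (n_edges_between c X V col)%:R => e; lra.
  have [p pE /andP[p1 p2]] := find_edge H2 Hdis Hp hlt.
  move: pE; rewrite inE => /and3P[pX pV /eqP pc].
  have colC' : col \in C' by apply: (subsetP sE).
  have hD : c p.1 p.2 \in D by rewrite pc inE colC'.
  have hI : c p.1 p.2 \notin img c S f by rewrite pc Hi !inE eqxx.
  have [Hp' Hi'] := extend Hp pX p1 pV p2 hD hI.
  exists (p.1 |: S), (fun y => if y == p.1 then p.2 else f y); split => //.
    by rewrite Hi' pc Hi setD1K.
  by rewrite cardsU1 p1 Hs.
have P2 : forall k S f, pm c X V D S f -> C' \subset img c S f -> #|X :\: S| = k ->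
    exists g, pm c X V D X g /\ C' \subset img c X g.
  elim=> [|k IH] S f Hp sC cX.
    have eSX : S = X.
      case: (Hp) => sSX _ _ _ _; apply/eqP; rewrite eqEsubset sSX /=.
      by move/eqP: cX; rewrite cards_eq0 setD_eq0.
    by rewrite eSX in Hp sC; exists f.
  have [x xXS] : exists x, x \in X :\: S by apply/set0Pn; rewrite -card_gt0 cX.
  move: (xXS); rewrite inE => /andP[xS xX].
  have hlt : (3 * #|S| < #|[set u in V | (u != x) && (c x u \in C)]|)%N.
    have hs : (#|S|.+1 <= #|X|)%N.
      case: (Hp) => sSX _ _ _ _.
      have := subset_leq_card (_ : x |: S \subset X); rewrite cardsU1 xS; apply.
      by rewrite subUset sub1set xX.
    have hsR : (#|S|.+1)%:R <= #|X|%:R :> R by rewrite ler_nat.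
    have hc := HC x.
    rewrite -(ltr_nat R) natrM; move: hsR hc HX; rewrite -!mulrA -natr1.
    have l0 : 0 <= lam * n%:R by rewrite mulr_ge0 // ltW.
    move: l0; move: (lam * n%:R) => L.
    move: (#|[set u in V | (u != x) && (c x u \in C)]|)%:R => N; lra.
  have [u uN /andP[u1 u2]] := find_vertex H2 Hp hlt.
  move: uN; rewrite inE => /andP[uV /andP[_ uC]].
  have hD : c x u \in D by rewrite inE uC orbT.
  have [Hp' Hi'] := extend Hp xX xS uV u1 hD u2.
  apply: (IH _ _ Hp').
    by rewrite Hi'; apply: subset_trans sC (subsetUr _ _).
  move: cX; rewrite (cardsD1 x (X :\: S)) xXS => -[<-].
  apply: eq_card => y; rewrite !inE.
  by case: (y == x); case: (y \in S); case: (y \in X).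
have [S [f [Hp Hi _]]] := P1 _ C' (subxx _) erefl.
have sCi : C' \subset img c S f by rewrite Hi.
have [g [[_ gV ginj cinj cD] sC]] := P2 _ S f Hp sCi erefl.
exists g; split; first by split.
move=> col /(subsetP sC) /imsetP[x xX ->]; by exists x.
Qed.
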